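(* Let $H$ be a $k$-linear semi-Hopf category and let $A$ be an $H$-Galois category extension of $B=A^{{\rm co}H}$. Then for all $x,y,z\in X$ the map $$\delta^x_{yz}:{\rm Hom}_k(H_{xz},A_{zy})\to{}_{B_x}{\rm Hom}(A_{xz},A_{xy}),\qquad\delta^x_{yz}(g)(a)=a_{[0]}g(a_{[1]}),$$ is bijective, with inverse $\varphi\mapsto\big(h\mapsto\sum_i l_i(h)\varphi(r_i(h))\big)$ where $\sum_i l_i(h)\otimes_{B_x}r_i(h)=({\rm can}^z_{xz})^{-1}(1_z\otimes h)$. Moreover $\delta$ is a morphism of clusters $\#(H,A)\to{}_B{\rm End}(A)^{\rm op}$, i.e. $\delta^x_{yu}(g\#g')=\delta^x_{yz}(g)\circ\delta^x_{zu}(g')$ and $\delta^x_{yy}(i^x_y)={\rm id}_{A_{xy}}$; hence $\delta$ is an isomorphism of clusters.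
   Context: Let $k$ be a commutative ring; unadorned $\otimes$ is over $k$. A $k$-linear category $A$ with class of objects $X$ consists of $k$-modules $A_{xy}$, associative compositions $A_{xy}\otimes A_{yz}\to A_{xz}$, $a\otimes b\mapsto ab$, and units $1_x\in A_{xx}$. A $k$-linear semi-Hopf category $H$ (objects $X$) is a $k$-linear category in which each $H_{xy}$ is a $k$-coalgebra with $\Delta_{xy}(h)=h_{(1)}\otimes h_{(2)}$ and counit $\varepsilon_{xy}$, such that $\Delta_{xz}(hh')=h_{(1)}h'_{(1)}\otimes h_{(2)}h'_{(2)}$, $\Delta_{xx}(1_x)=1_x\otimes1_x$, $\varepsilon_{xz}(hh')=\varepsilon_{xy}(h)\varepsilon_{yz}(h')$, $\varepsilon_{xx}(1_x)=1$. A right $H$-comodule category is a $k$-linear category $A$ with objects $X$ such that each $A_{xy}$ is a right $H_{xy}$-comodule, $\rho_{xy}(a)=a_{[0]}\otimes a_{[1]}$, with $\rho_{xz}(ab)=a_{[0]}b_{[0]}\otimes a_{[1]}b_{[1]}$ and $\rho_{xx}(1_x)=1_x\otimes1_x$. Its coinvariants are $B_x=\{a\in A_{xx}\mid\rho_{xx}(a)=a\otimes1_x\}$. $A$ is an $H$-Galois category extension of $B$ if all ${\rm can}^z_{xy}:A_{zx}\otimes_{B_x}A_{xy}\to A_{zy}\otimes H_{xy}$, $a\otimes_{B_x}a'\mapsto aa'_{[0]}\otimes a'_{[1]}$, are bijective. A $k$-linear cluster is a family $(\mathcal{C}^x)_{x\in X}$ of $k$-linear categories with object class $X$; a morphism of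 clusters is a family of $k$-linear functors that are the identity on objects. The Koppinen cluster $\mathcal{C}=\#(H,A)$ has $\mathcal{C}^x_{yz}={\rm Hom}_k(H_{xz},A_{zy})$, with multiplication, for $g\in\mathcal{C}^x_{yz}$, $g'\in\mathcal{C}^x_{zu}$, $h\in H_{xu}$: $(g\#g')(h)=g'(h_{(2)})_{[0]}\,g\big(h_{(1)}g'(h_{(2)})_{[1]}\big)$, and units $i^x_y(h)=\varepsilon_{xy}(h)1_y$. ${}_B{\rm End}(A)^{\rm op}$ is the cluster with components ${}_{B_x}{\rm Hom}(A_{xz},A_{xy})$ in position $(x;y,z)$, multiplied by composition. *)

(* Defs.v *)
From HB Require Import structures.
From mathcomp Require Import all_boot all_algebra.
Import GRing.Theory.
Set Implicit Arguments.
Unset Strict Implicit.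
Unset Printing Implicit Defensive.
Local Open Scope ring_scope.

(* Tensor products are represented by finite formal sums of
   pure tensors (sequences of pairs / triples).  Two formal sums are equal in
   the tensor product iff every (multi)linear map, resp. every k-bilinear
   B-balanced map, into an arbitrary k-module takes the same value on them;
   this is exactly equality in M (x)_k N, resp. M (x)_B N. *)

Section Tensors.
Variable k : comPzRingType.

Definition klinear (M P : lmodType k) (f : M -> P) : Prop :=
  forall (a : k) (u v : M), f (a *: u + v) = a *: f u + f v.

Definition bilin (M N P : lmodType k) (f : M -> N -> P) : Prop :=
  (forall n : N, klinear (fun m => f m n)) /\ (forall m : M, klinear (f m)).

Definition trilin (M N Q P : lmodType k) (f : M -> N -> Q -> P) : Prop :=
  (forall n q, klinear (fun m => f m n q)) /\
  (forall m q, klinear (fun n => f m n q)) /\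
  (forall m n, klinear (f m n)).

Definition teq2 (M N : lmodType k) (s t : seq (M * N)) : Prop :=
  forall (P : lmodType k) (f : M -> N -> P), bilin f ->
    \sum_(p <- s) f p.1 p.2 = \sum_(p <- t) f p.1 p.2.

Definition teq3 (M N Q : lmodType k) (s t : seq (M * N * Q)) : Prop :=
  forall (P : lmodType k) (f : M -> N -> Q -> P), trilin f ->
    \sum_(p <- s) f p.1.1 p.1.2 p.2 = \sum_(p <- t) f p.1.1 p.1.2 p.2.

Definition tscale (M N : lmodType k) (a : k) (s : seq (M * N)) : seq (M * N) :=
  [seq (a *: p.1, p.2) | p <- s].

Record kcat (X : Type) := KCat {
  khom : X -> X -> lmodType k;
  kcomp : forall x y z, khom x y -> khom y z -> khom x z;
  kone : forall x, khom x x;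
  compA : forall x y z w (a : khom x y) (b : khom y z) (c : khom z w),
    kcomp (kcomp a b) c = kcomp a (kcomp b c);
  comp1l : forall x y (a : khom x y), kcomp (kone x) a = a;
  comp1r : forall x y (a : khom x y), kcomp a (kone y) = a;
  comp_bilin : forall x y z, bilin (@kcomp x y z)
}.

Record semiHopfCat (X : Type) := SemiHopfCat {
  hcat :> kcat X;
  Delta : forall x y, khom hcat x y -> seq (khom hcat x y * khom hcat x y);
  eps : forall x y, khom hcat x y -> k;
  Delta_lin : forall x y (a : k) (u v : khom hcat x y),
    teq2 (Delta (a *: u + v)) (tscale a (Delta u) ++ Delta v);
  eps_lin : forall x y (a : k) (u v : khom hcat x y),
    eps (a *: u + v) = a * eps u + eps v;
  Delta_coass : forall x y (h : khom hcat x y),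
    teq3 [seq (q.1, q.2, p.2) | p <- Delta h, q <- Delta p.1]
         [seq (p.1, q.1, q.2) | p <- Delta h, q <- Delta p.2];
  Delta_counitl : forall x y (h : khom hcat x y),
    \sum_(p <- Delta h) eps p.1 *: p.2 = h;
  Delta_counitr : forall x y (h : khom hcat x y),
    \sum_(p <- Delta h) eps p.2 *: p.1 = h;
  Delta_mul : forall x y z (h : khom hcat x y) (h' : khom hcat y z),
    teq2 (Delta (kcomp h h'))
         [seq (kcomp p.1 q.1, kcomp p.2 q.2) | p <- Delta h, q <- Delta h'];
  Delta_one : forall x, teq2 (Delta (kone hcat x)) [:: (kone hcat x, kone hcat x)];
  eps_mul : forall x y z (h : khom hcat x y) (h' : khom hcat y z),
    eps (kcomp h h') = eps h * eps h';
  eps_one : forall x, eps (kone hcat x) = 1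
}.

Record comodCat (X : Type) (H : semiHopfCat X) := ComodCat {
  acat :> kcat X;
  rho : forall x y, khom acat x y -> seq (khom acat x y * khom H x y);
  rho_lin : forall x y (a : k) (u v : khom acat x y),
    teq2 (rho (a *: u + v)) (tscale a (rho u) ++ rho v);
  rho_coass : forall x y (u : khom acat x y),
    teq3 [seq (q.1, q.2, p.2) | p <- rho u, q <- rho p.1]
         [seq (p.1, q.1, q.2) | p <- rho u, q <- Delta p.2];
  rho_counit : forall x y (u : khom acat x y),
    \sum_(p <- rho u) eps p.2 *: p.1 = u;
  rho_mul : forall x y z (u : khom acat x y) (v : khom acat y z),
    teq2 (rho (kcomp u v))
         [seq (kcomp p.1 q.1, kcomp p.2 q.2) | p <- rho u, q <- rho v];
  rho_one : forall x, teq2 (rho (kone acat x)) [:: (kone acat x, kone H x)]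
}.

Section Comod.
Variables (X : Type) (H : semiHopfCat X) (A : comodCat H).

Definition coinv (x : X) (b : khom A x x) : Prop :=
  teq2 (rho b) [:: (b, kone H x)].

Definition teqB (z x y : X) (s t : seq (khom A z x * khom A x y)) : Prop :=
  forall (P : lmodType k) (f : khom A z x -> khom A x y -> P), bilin f ->
    (forall a b a', coinv b -> f (kcomp a b) a' = f a (kcomp b a')) ->
    \sum_(p <- s) f p.1 p.2 = \sum_(p <- t) f p.1 p.2.

Definition canmap (z x y : X) (s : seq (khom A z x * khom A x y))
  : seq (khom A z y * khom H x y) :=
  [seq (kcomp p.1 q.1, q.2) | p <- s, q <- rho p.2].

Definition galois : Prop :=
  forall z x y,
    (forall s t : seq (khom A z x * khom A x y),
        teq2 (canmap s) (canmap t) -> teqB s t) /\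
    (forall t : seq (khom A z y * khom H x y), exists s, teq2 (canmap s) t).

Definition BHom (x z y : X) (f : khom A x z -> khom A x y) : Prop :=
  (forall u v, f (u + v) = f u + f v) /\
  (forall b a, coinv b -> f (kcomp b a) = kcomp b (f a)).

Definition delta (x y z : X) (g : khom H x z -> khom A z y) (a : khom A x z)
  : khom A x y :=
  \sum_(p <- rho a) kcomp p.1 (g p.2).

(* the candidate inverse: h |-> sum_i l_i(h) phi(r_i(h)),
   given L h = sum_i l_i(h) (x)_{B_x} r_i(h) *)
Definition delta_inv (x y z : X) (L : khom H x z -> seq (khom A z x * khom A x z))
  (phi : khom A x z -> khom A x y) (h : khom H x z) : khom A z y :=
  \sum_(p <- L h) kcomp p.1 (phi p.2).

Definition smash (x y z u : X) (g : khom H x z -> khom A z y)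
  (g' : khom H x u -> khom A u z) (h : khom H x u) : khom A u y :=
  \sum_(p <- Delta h) \sum_(q <- rho (g' p.2)) kcomp q.1 (g (kcomp p.1 q.2)).

Definition kunit (x y : X) (h : khom H x y) : khom A y y := eps h *: kone A y.

End Comod.
End Tensors.

(* Main.v *)
Require Import Defs.
From HB Require Import structures.
From mathcomp Require Import all_boot all_algebra.
From Stdlib Require Import IndefiniteDescription.
Import GRing.Theory.
Set Implicit Arguments.
Unset Strict Implicit.
Unset Printing Implicit Defensive.
Local Open Scope ring_scope.
Section Lin.
Variable k : comPzRingType.
Implicit Types M N Q P : lmodType k.

Lemma klinD M P (f : M -> P) : klinear f -> forall u v, f (u + v) = f u + f v.
Proof. by move=> hf u v; have := hf 1 u v; rewrite !scale1r. Qed.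

Lemma klin0 M P (f : M -> P) : klinear f -> f 0 = 0.
Proof.
move=> hf; have := klinD hf 0 0; rewrite addr0 => /(congr1 (fun w => w - f 0)).
by rewrite addrK subrr => ->.
Qed.

Lemma klinZ M P (f : M -> P) : klinear f -> forall a u, f (a *: u) = a *: f u.
Proof. by move=> hf a u; rewrite -[a *: u]addr0 hf klin0 // addr0. Qed.

Lemma klin_sum M P (f : M -> P) I (s : seq I) (F : I -> M) : klinear f ->
  f (\sum_(i <- s) F i) = \sum_(i <- s) f (F i).
Proof.
move=> hf; elim: s => [|i s IH]; first by rewrite !big_nil klin0.
by rewrite !big_cons klinD // IH.
Qed.

Lemma klin_sumf M P I (s : seq I) (F : I -> M -> P) :
  (forall i, klinear (F i)) -> klinear (fun u => \sum_(i <- s) F i u).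
Proof.
move=> hF a u v; rewrite scaler_sumr -big_split /=.
by apply: eq_bigr => i _; rewrite hF.
Qed.

Lemma klin_comp M N P (f : N -> P) (g : M -> N) :
  klinear f -> klinear g -> klinear (fun u => f (g u)).
Proof. by move=> hf hg a u v; rewrite hg hf. Qed.

Lemma klin_id M : klinear (fun u : M => u).
Proof. by []. Qed.

Lemma bilin_sum M N P I (s : seq I) (F : I -> M -> N -> P) :
  (forall i, bilin (F i)) -> bilin (fun m n => \sum_(i <- s) F i m n).
Proof.
move=> hF; split.
  by move=> n; apply: klin_sumf => i; exact: (hF i).1.
by move=> m; apply: klin_sumf => i; exact: (hF i).2.
Qed.

Lemma bilin_sumL M N P (f : M -> N -> P) I (s : seq I) (F : I -> M) n :
  bilin f -> f (\sum_(i <- s) F i) n = \sum_(i <- s) f (F i) n.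
Proof. by move=> hf; rewrite (klin_sum _ _ (hf.1 n)). Qed.

Lemma bilin_sumR M N P (f : M -> N -> P) I (s : seq I) (F : I -> N) m :
  bilin f -> f m (\sum_(i <- s) F i) = \sum_(i <- s) f m (F i).
Proof. by move=> hf; rewrite (klin_sum _ _ (hf.2 m)). Qed.

Lemma sum_tscale M N P (f : M -> N -> P) a (s : seq (M * N)) :
  bilin f -> \sum_(p <- tscale a s) f p.1 p.2 = a *: \sum_(p <- s) f p.1 p.2.
Proof.
move=> hf; rewrite /tscale big_map scaler_sumr; apply: eq_bigr => p _ /=.
by rewrite (klinZ (hf.1 _)).
Qed.

Lemma teq2_lin M N (X : lmodType k) (T : X -> seq (M * N)) :
  (forall a u v, teq2 (T (a *: u + v)) (tscale a (T u) ++ T v)) ->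
  forall P (f : M -> N -> P), bilin f ->
    klinear (fun u => \sum_(p <- T u) f p.1 p.2).
Proof.
move=> hT P f hf a u v /=; rewrite (hT a u v P f hf) big_cat /=.
by rewrite sum_tscale.
Qed.

End Lin.

Section Comod2.
Variables (k : comPzRingType) (X : Type) (H : semiHopfCat k X) (A : comodCat H).
Implicit Types P : lmodType k.

Lemma kcompL_lin (C : kcat k X) x y z (c : khom C y z) :
  klinear (fun m : khom C x y => kcomp m c).
Proof. exact: (comp_bilin C x y z).1. Qed.

Lemma kcompR_lin (C : kcat k X) x y z (m : khom C x y) :
  klinear (fun c : khom C y z => kcomp m c).
Proof. exact: (comp_bilin C x y z).2. Qed.

Lemma kcompZl (C : kcat k X) x y z (a : k) (m : khom C x y) (c : khom C y z) :
  kcomp (a *: m) c = a *: kcomp m c.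
Proof. exact: (klinZ (kcompL_lin c)). Qed.

Lemma kcompZr (C : kcat k X) x y z (a : k) (m : khom C x y) (c : khom C y z) :
  kcomp m (a *: c) = a *: kcomp m c.
Proof. exact: (klinZ (kcompR_lin m)). Qed.

Lemma kcompDl (C : kcat k X) x y z (m m' : khom C x y) (c : khom C y z) :
  kcomp (m + m') c = kcomp m c + kcomp m' c.
Proof. exact: (klinD (kcompL_lin c)). Qed.

Lemma kcompDr (C : kcat k X) x y z (m : khom C x y) (c c' : khom C y z) :
  kcomp m (c + c') = kcomp m c + kcomp m c'.
Proof. exact: (klinD (kcompR_lin m)). Qed.

Lemma kcomp_suml (C : kcat k X) x y z I (s : seq I) (F : I -> khom C x y) (c : khom C y z) :
  kcomp (\sum_(i <- s) F i) c = \sum_(i <- s) kcomp (F i) c.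
Proof. exact: (klin_sum _ _ (kcompL_lin c)). Qed.

Lemma kcomp_sumr (C : kcat k X) x y z I (s : seq I) (m : khom C x y) (F : I -> khom C y z) :
  kcomp m (\sum_(i <- s) F i) = \sum_(i <- s) kcomp m (F i).
Proof. exact: (klin_sum _ _ (kcompR_lin m)). Qed.

Lemma rsum_lin x y P (f : khom A x y -> khom H x y -> P) :
  bilin f -> klinear (fun u => \sum_(p <- rho u) f p.1 p.2).
Proof. by apply: teq2_lin; exact: rho_lin. Qed.

Lemma dsum_lin x y P (f : khom H x y -> khom H x y -> P) :
  bilin f -> klinear (fun u => \sum_(p <- Delta u) f p.1 p.2).
Proof. by apply: teq2_lin; exact: Delta_lin. Qed.

Lemma rsum_mul x y z P (f : khom A x z -> khom H x z -> P)
  (u : khom A x y) (v : khom A y z) : bilin f ->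
  \sum_(p <- rho (kcomp u v)) f p.1 p.2 =
  \sum_(p <- rho u) \sum_(q <- rho v) f (kcomp p.1 q.1) (kcomp p.2 q.2).
Proof. by move=> hf; rewrite (rho_mul _ _ hf) big_allpairs_dep. Qed.

Lemma rsum_one x P (f : khom A x x -> khom H x x -> P) : bilin f ->
  \sum_(p <- rho (kone A x)) f p.1 p.2 = f (kone A x) (kone H x).
Proof. by move=> hf; rewrite (rho_one hf) big_seq1. Qed.

Lemma coinv_sum x P (f : khom A x x -> khom H x x -> P) b : coinv b -> bilin f ->
  \sum_(p <- rho b) f p.1 p.2 = f b (kone H x).
Proof. by move=> hb hf; rewrite (hb _ _ hf) big_seq1. Qed.

Lemma coinv_scal x (c : k) : coinv (c *: kone A x).
Proof.
move=> P f hf; rewrite big_seq1 /=.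
rewrite (klinZ (rsum_lin hf)) (rsum_one hf).
by rewrite (klinZ (hf.1 _)).
Qed.

Lemma BHom_lin x z y (phi : khom A x z -> khom A x y) : BHom phi -> klinear phi.
Proof.
case=> hadd hB c u v; rewrite hadd; congr (_ + _).
have -> : c *: u = kcomp (c *: kone A x) u.
  by rewrite kcompZl comp1l.
rewrite hB; last exact: coinv_scal.
by rewrite kcompZl comp1l.
Qed.

End Comod2.

Section Main.
Variables (k : comPzRingType) (X : Type) (H : semiHopfCat k X) (A : comodCat H).
Implicit Types P : lmodType k.

Lemma bilin_Fg {w : X} x z y (g : khom H x z -> khom A z y) :
  klinear g -> bilin (fun (m : khom A w z) h => kcomp m (g h)).
Proof.
move=> hg; split; first by move=> n; exact: kcompL_lin.
by move=> m; apply: klin_comp hg; exact: kcompR_lin.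
Qed.

Lemma delta_BHom x y z (g : khom H x z -> khom A z y) :
  klinear g -> BHom (delta g).
Proof.
move=> hg; split.
  by move=> u v; rewrite /delta (klinD (rsum_lin (bilin_Fg hg))).
move=> b a hb; rewrite /delta.
have E0 := rsum_mul b a (bilin_Fg hg); cbv beta in E0; rewrite E0.
have hB : bilin (fun (m : khom A x x) (h : khom H x x) =>
   \sum_(q <- rho a) kcomp (kcomp m q.1) (g (kcomp h q.2))).
  apply: bilin_sum => q; split.
    by move=> n; apply: (klin_comp (kcompL_lin _)); exact: kcompL_lin.
  move=> m; apply: (klin_comp (kcompR_lin _)).
  by apply: (klin_comp hg); exact: kcompL_lin.
have E := coinv_sum hb hB; cbv beta in E; rewrite E kcomp_sumr.
by apply: eq_bigr => q _; rewrite comp1l Defs.compA.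
Qed.

Lemma delta_kunit x y (a : khom A x y) : delta (@kunit _ _ _ A x y) a = a.
Proof.
rewrite /delta /kunit -[RHS](rho_counit a); apply: eq_bigr => p _.
by rewrite kcompZr comp1r.
Qed.

Lemma delta_smash x y z u (g : khom H x z -> khom A z y)
  (g' : khom H x u -> khom A u z) : klinear g -> klinear g' ->
  forall a, delta (smash g g') a = delta g (delta g' a).
Proof.
move=> hg hg' a.
pose Ftri := fun (m : khom A x u) (h1 h2 : khom H x u) =>
  \sum_(q <- rho (g' h2)) kcomp m (kcomp q.1 (g (kcomp h1 q.2))).
have hT : trilin Ftri.
  split; last split.
  - move=> n q; apply: klin_sumf => s; exact: kcompL_lin.
  - move=> m q; apply: klin_sumf => s.
    apply: (klin_comp (kcompR_lin _)); apply: (klin_comp (kcompR_lin _)).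
    by apply: (klin_comp hg); exact: kcompL_lin.
  - move=> m h1.
    have BIL : bilin (fun (n : khom A u z) (h : khom H u z) =>
                  kcomp m (kcomp n (g (kcomp h1 h)))).
      split.
        by move=> n; apply: (klin_comp (kcompR_lin _)); exact: kcompL_lin.
      move=> n; apply: (klin_comp (kcompR_lin _)); apply: (klin_comp (kcompR_lin _)).
      by apply: (klin_comp hg); exact: kcompR_lin.
    exact: (klin_comp (rsum_lin BIL) hg').
have E := rho_coass a hT; rewrite !big_allpairs_dep /= in E.
transitivity (\sum_(p <- rho a) \sum_(r <- Delta p.2) Ftri p.1 r.1 r.2).
  rewrite /delta; apply: eq_bigr => p _; rewrite /smash kcomp_sumr.
  by apply: eq_bigr => r _; rewrite kcomp_sumr.
rewrite -E /delta.
have E1 := klin_sum (rho a) (fun p => kcomp p.1 (g' p.2)) (rsum_lin (bilin_Fg hg)).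
cbv beta in E1; rewrite E1; apply: eq_bigr => p _.
have E2 := rsum_mul p.1 (g' p.2) (bilin_Fg hg); cbv beta in E2; rewrite E2.
apply: eq_bigr => q _; rewrite /Ftri; apply: eq_bigr => s _.
by rewrite Defs.compA.
Qed.

End Main.

Section Gal.
Variables (k : comPzRingType) (X : Type) (H : semiHopfCat k X) (A : comodCat H).
Implicit Types P : lmodType k.

Lemma canmap_sum z x y P (F : khom A z y -> khom H x y -> P) s :
  \sum_(p <- canmap s) F p.1 p.2 =
  \sum_(p <- s) \sum_(q <- rho p.2) F (kcomp p.1 q.1) q.2.
Proof. by rewrite /canmap big_allpairs_dep. Qed.

Lemma G_bilin z x y P (F : khom A z y -> khom H x y -> P) : bilin F ->
  bilin (fun (m : khom A z x) (n : khom A x y) =>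
    \sum_(q <- rho n) F (kcomp m q.1) q.2).
Proof.
move=> hF; split.
  move=> n; apply: klin_sumf => q; apply: (klin_comp (hF.1 _)).
  exact: kcompL_lin.
move=> m; apply: (rsum_lin (f := fun n' h => F (kcomp m n') h)); split.
  by move=> h; apply: (klin_comp (hF.1 _)); exact: kcompR_lin.
by move=> n'; exact: hF.2.
Qed.

Lemma canmap_G z x y P (F : khom A z y -> khom H x y -> P) s :
  \sum_(p <- canmap s) F p.1 p.2 =
  \sum_(p <- s) (fun m n => \sum_(q <- rho n) F (kcomp m q.1) q.2) p.1 p.2.
Proof. exact: canmap_sum. Qed.

Lemma canmap_cat z x y P (F : khom A z y -> khom H x y -> P) c s t :
  bilin F -> \sum_(p <- canmap (tscale c s ++ t)) F p.1 p.2 =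
  c *: \sum_(p <- canmap s) F p.1 p.2 + \sum_(p <- canmap t) F p.1 p.2.
Proof.
move=> hF; rewrite !canmap_sum big_cat /tscale big_map scaler_sumr.
congr (_ + _); apply: eq_bigr => p _; rewrite scaler_sumr.
by apply: eq_bigr => q _; rewrite kcompZl (klinZ (hF.1 _)).
Qed.

Lemma delta_recover x y z (g : khom H x z -> khom A z y) h s :
  klinear g -> teq2 (canmap s) [:: (kone A z, h)] ->
  \sum_(p <- s) kcomp p.1 (delta g p.2) = g h.
Proof.
move=> hg hs; have E := hs _ _ (bilin_Fg hg).
rewrite (canmap_sum (fun m h => kcomp m (g h)) s) big_seq1 in E.
cbv beta in E; rewrite comp1l in E; rewrite -E.
apply: eq_bigr => p _; rewrite /delta kcomp_sumr.
by apply: eq_bigr => q _; rewrite Defs.compA.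
Qed.

Lemma bilin_Fphi {w : X} x z y (phi : khom A x z -> khom A x y) :
  klinear phi -> bilin (fun (m : khom A w x) n => kcomp m (phi n)).
Proof.
move=> hg; split; first by move=> n; exact: kcompL_lin.
by move=> m; apply: klin_comp hg; exact: kcompR_lin.
Qed.

Lemma delta_inj (gal : galois A) x y z (g g' : khom H x z -> khom A z y) :
  klinear g -> klinear g' -> (forall a, delta g a = delta g' a) ->
  forall h, g h = g' h.
Proof.
move=> hg hg' E h; have [s hs] := (gal z x z).2 [:: (kone A z, h)].
rewrite -(delta_recover hg hs) -(delta_recover hg' hs).
by apply: eq_bigr => p _; rewrite E.
Qed.

Lemma inv_lin (gal : galois A) x y z (L : khom H x z -> seq (khom A z x * khom A x z))
  (hL : forall h, teq2 (canmap (L h)) [:: (kone A z, h)])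
  (phi : khom A x z -> khom A x y) : BHom phi -> klinear (delta_inv L phi).
Proof.
move=> hphi c u v; rewrite /delta_inv.
have hT : teqB (L (c *: u + v)) (tscale c (L u) ++ L v).
  apply: (gal z x z).1 => P F hF.
  rewrite (hL _ P F hF) big_seq1 /=.
  rewrite canmap_cat // (hL u P F hF) (hL v P F hF) !big_seq1 /=.
  exact: hF.2.
have hf := bilin_Fphi (w := z) (BHom_lin hphi).
have hbal : forall (a : khom A z x) b a', coinv b ->
    kcomp (kcomp a b) (phi a') = kcomp a (phi (kcomp b a')).
  by move=> a b a' hb; rewrite hphi.2 // Defs.compA.
have E := hT _ _ hf hbal; cbv beta in E; rewrite E big_cat (sum_tscale c (L u) hf).
by [].
Qed.

Lemma inv_right (gal : galois A) x y z (L : khom H x z -> seq (khom A z x * khom A x z))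
  (hL : forall h, teq2 (canmap (L h)) [:: (kone A z, h)])
  (phi : khom A x z -> khom A x y) : BHom phi ->
  forall a, delta (delta_inv L phi) a = phi a.
Proof.
move=> hphi a.
pose s1 := [seq (kcomp p.1 r.1, r.2) | p <- rho a, r <- L p.2].
have hT : teqB s1 [:: (kone A x, a)].
  apply: (gal x x z).1 => P F hF.
  rewrite (canmap_G F) /s1 big_allpairs_dep /= (canmap_G F) big_seq1 /=.
  rewrite [RHS](eq_bigr (fun q => F q.1 q.2)); last by move=> q _; rewrite comp1l.
  apply: eq_bigr => p _.
  have hFp : bilin (fun (m : khom A z z) (h : khom H x z) => F (kcomp p.1 m) h).
    split; last by move=> m; exact: hF.2.
    by move=> n; apply: (klin_comp (hF.1 n)); exact: kcompR_lin.
  have E := hL p.2 _ _ hFp.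
  rewrite (canmap_sum (fun m h => F (kcomp p.1 m) h) (L p.2)) big_seq1 in E.
  cbv beta in E; rewrite comp1r in E; rewrite -E.
  apply: eq_bigr => r _; apply: eq_bigr => q _; by rewrite Defs.compA.
have hf := bilin_Fphi (w := x) (BHom_lin hphi).
have hbal : forall (a0 : khom A x x) b a', coinv b ->
    kcomp (kcomp a0 b) (phi a') = kcomp a0 (phi (kcomp b a')).
  by move=> a0 b a' hb; rewrite hphi.2 // Defs.compA.
have E := hT _ _ hf hbal; cbv beta in E.
rewrite /s1 big_allpairs_dep big_seq1 /= comp1l in E.
rewrite -[RHS]E /delta /delta_inv; apply: eq_bigr => p _; rewrite kcomp_sumr.
by apply: eq_bigr => r _; rewrite Defs.compA.
Qed.

End Gal.

Unset Implicit Arguments.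
Set Strict Implicit.

Theorem proposition7p2 (k : comPzRingType) (X : Type) (H : semiHopfCat k X)
  (A : comodCat H) :
  galois A ->
  (forall x y z : X,
    (* delta maps Hom_k(H_xz, A_zy) into B_x Hom(A_xz, A_xy) *)
    (forall g : khom H x z -> khom A z y, klinear g -> BHom (delta g)) /\
    (* injective *)
    (forall g g' : khom H x z -> khom A z y, klinear g -> klinear g' ->
       (forall a, delta g a = delta g' a) -> forall h, g h = g' h) /\
    (* surjective *)
    (forall phi : khom A x z -> khom A x y, BHom phi ->
       exists g : khom H x z -> khom A z y,
         klinear g /\ forall a, delta g a = phi a) /\
    (* explicit inverse *)
    (forall L : khom H x z -> seq (khom A z x * khom A x z),
       (forall h, teq2 (canmap (L h)) [:: (kone A z, h)]) ->
       (forall phi : khom A x z -> khom A x y, BHom phi ->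
          klinear (delta_inv L phi) /\
          forall a, delta (delta_inv L phi) a = phi a) /\
       (forall g : khom H x z -> khom A z y, klinear g ->
          forall h, delta_inv L (delta g) h = g h))) /\
  (* morphism of clusters: multiplicativity *)
  (forall (x y z u : X) (g : khom H x z -> khom A z y)
          (g' : khom H x u -> khom A u z),
     klinear g -> klinear g' ->
     forall a, delta (smash g g') a = delta g (delta g' a)) /\
  (* morphism of clusters: units *)
  (forall (x y : X) (a : khom A x y), delta (@kunit _ _ _ A x y) a = a).

Proof.
move=> gal; split; [|split].
- move=> x y z; split; [|split; [|split]].
  + by move=> g hg; exact: delta_BHom.
  + by move=> g g' hg hg' E; exact: (delta_inj gal hg hg' E).
  + move=> phi hphi.
    pose L := fun h => proj1_sig (constructive_indefinite_description _
                 ((gal z x z).2 [:: (kone A z, h)])).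
    have hL : forall h, teq2 (canmap (L h)) [:: (kone A z, h)].
      by move=> h; exact: (proj2_sig (constructive_indefinite_description _
                 ((gal z x z).2 [:: (kone A z, h)]))).
    exists (delta_inv L phi); split; first exact: (inv_lin gal hL hphi).
    exact: (inv_right gal hL hphi).
  + move=> L hL; split.
      by move=> phi hphi; split; [exact: (inv_lin gal hL hphi) | exact: (inv_right gal hL hphi)].
    by move=> g hg h; rewrite /delta_inv; exact: (delta_recover hg (hL h)).
- by move=> x y z u g g' hg hg' a; exact: delta_smash.
- by move=> x y a; exact: delta_kunit.
Qed.
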